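(* Let $X$ be a set of $n$ points with similarity function $S$, suppose the target clustering $\mathcal{C}^{\ast}=\{C^{\ast}_1,\dots,C^{\ast}_k\}$ satisfies strict threshold separation with respect to $S$, and suppose the initial clustering has clustering error $\gamma$, where $\gamma$ is any natural clustering error. In the $\eta$-merge model, for any $\eta>0$, the interactive algorithm using the local split procedure and the threshold merge procedure (described below) requires at most $O(\gamma+k)\log_{\frac{1}{1-\eta}} n$ edit requests to find the target clustering.
   Context: $\mathcal{C}^{\ast}$ satisfies strict threshold separation w.r.t. $S$ if there is a threshold $t$ such that $S(x,y)>t$ whenever $x,y$ are in the same target cluster and $S(x,y)\le t$ whenever they are in different target clusters. A natural clustering error is a function $\gamma$ assigning to each clustering $\mathcal{C}$ of $X$ a nonnegative integer $\gamma(\mathcal{C},\mathcal{C}^{\ast})$ such that for every clustering $\mathcal{C}$: (1) if a cluster $C_i\in\mathcal{C}$ contains points of $C^{\ast}_j$ and of some other target cluster, replacing $C_i$ by $C_i\cap C^{\ast}_j$ and $C_i\setminus C^{\ast}_j$ strictly decreases $\gamma$; (2) if two distinct clusters of $\mathcal{C}$ contain only points from the same target cluster, replacing them by their union strictly decreases $\gamma$. Process ($\eta$-merge model): start from the initial clustering, all clusters labelled ''impure''. An oracle repeatedly issues split$(C_i)$ (only if current $C_i$ has points of two or more target clusters) or merge$(C_i,C_j)$ for distinct current clusters (only if some $C^{\ast}_l$ has $|C_i\cap C^{\ast}_l|\ge\eta|C_i|$ and $|C_j\cap C^{\ast}_l|\ge\eta|C_j|$). Local split: build the average-linkage tree of $C_i$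 (leaves are singletons; repeatedly merge the two current nodes with largest average pairwise similarity, ties arbitrary) and replace $C_i$ by the two children of its root, labelled ''impure''. Threshold merge: $\eta_1=1$ if $C_i$ is ''pure'', else $\eta$; $\eta_2$ likewise. Starting from the edgeless graph on $C_i\cup C_j$, repeatedly add an edge between the not-yet-connected pair of highest similarity, stopping as soon as some connected component $N$ has $|N\cap C_i|\ge\eta_1|C_i|$ and $|N\cap C_j|\ge\eta_2|C_j|$; replace $C_i,C_j$ by $C_i\setminus N$, $C_j\setminus N$ (labels kept, empty clusters discarded) and add new cluster $N$ labelled ''pure''. The bound counts requests until the current clustering equals $\mathcal{C}^{\ast}$, for any sequence of allowed requests; $O(\cdot)$ hides an absolute constant. *)

(* Defs.v *)
From HB Require Import structures.
From mathcomp Require Import all_boot all_order all_algebra.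
From mathcomp Require Import reals exp.
Set Implicit Arguments. Unset Strict Implicit. Unset Printing Implicit Defensive.
Import Order.TTheory GRing.Theory Num.Theory.
Local Open Scope ring_scope.

Section Clustering.
Variables (R : realType) (T : finType).

(* A clustering of X = T: a partition of the whole ground set (no empty blocks). *)
Definition clustering (C : {set {set T}}) : Prop := partition C [set: T].

Definition strict_threshold_separation (S : T -> T -> R) (Cstar : {set {set T}}) :=
  exists t : R,
    (forall x y, (exists2 D, D \in Cstar & (x \in D) && (y \in D)) -> S x y > t) /\
    (forall x y, ~ (exists2 D, D \in Cstar & (x \in D) && (y \in D)) -> S x y <= t).

Definition natural_clustering_error (Cstar : {set {set T}})
    (gamma : {set {set T}} -> nat) : Prop :=
  (forall C, clustering C ->
     forall Ci Cj, Ci \in C -> Cj \in Cstar ->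
       Ci :&: Cj != set0 -> Ci :\: Cj != set0 ->
       (gamma ((C :\ Ci) :|: [set Ci :&: Cj; Ci :\: Cj]) < gamma C)%N) /\
  (forall C, clustering C ->
     forall Ci Cj Cl, Ci \in C -> Cj \in C -> Ci != Cj -> Cl \in Cstar ->
       Ci \subset Cl -> Cj \subset Cl ->
       (gamma ((C :\ Ci :\ Cj) :|: [set Ci :|: Cj]) < gamma C)%N).

Definition avg_sim (S : T -> T -> R) (A B : {set T}) : R :=
  (\sum_(x in A) \sum_(y in B) S x y) / (#|A| * #|B|)%:R.

Definition al_step (S : T -> T -> R) (Q Q' : {set {set T}}) : Prop :=
  exists A B, [/\ A \in Q, B \in Q, A != B,
    (forall A' B', A' \in Q -> B' \in Q -> A' != B' ->
        avg_sim S A' B' <= avg_sim S A B) &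
    Q' = (Q :\ A :\ B) :|: [set A :|: B]].

Inductive al_reach (S : T -> T -> R) (D : {set T}) : {set {set T}} -> Prop :=
  | al_start : al_reach S D [set [set x] | x in D]
  | al_next Q Q' : al_reach S D Q -> al_step S Q Q' -> al_reach S D Q'.

(* (A, B) are the two children of the root of some average-linkage tree of D. *)
Definition local_split (S : T -> T -> R) (D A B : {set T}) : Prop :=
  A != B /\ al_reach S D [set A; B].

(* Threshold-merge graph process on U = Ci :|: Cj. Edges stored as ordered
   pairs, read symmetrically. *)
Definition edge_rel (E : {set T * T}) : rel T :=
  fun a b => ((a, b) \in E) || ((b, a) \in E).

Definition component (E : {set T * T}) (x : T) : {set T} :=
  [set y | connect (edge_rel E) x y].

Definition tm_stop (eta1 eta2 : R) (Ci Cj : {set T}) (E : {set T * T})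
    (N : {set T}) : Prop :=
  (exists2 x, x \in Ci :|: Cj & N = component E x) /\
  eta1 * #|Ci|%:R <= #|N :&: Ci|%:R /\ eta2 * #|Cj|%:R <= #|N :&: Cj|%:R.

Definition tm_step (S : T -> T -> R) (U : {set T}) (E E' : {set T * T}) : Prop :=
  exists x y, [/\ x \in U, y \in U, x != y, ~~ edge_rel E x y &
    (forall x' y', x' \in U -> y' \in U -> x' != y' -> ~~ edge_rel E x' y' ->
        S x' y' <= S x y)] /\
    E' = (x, y) |: E.

Inductive tm_reach (S : T -> T -> R) (eta1 eta2 : R) (Ci Cj : {set T})
    : {set T * T} -> Prop :=
  | tm_start : tm_reach S eta1 eta2 Ci Cj set0
  | tm_next E E' : tm_reach S eta1 eta2 Ci Cj E ->
      (forall N, ~ tm_stop eta1 eta2 Ci Cj E N) ->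
      tm_step S (Ci :|: Cj) E E' -> tm_reach S eta1 eta2 Ci Cj E'.

Definition threshold_merge (S : T -> T -> R) (eta1 eta2 : R)
    (Ci Cj N : {set T}) : Prop :=
  exists2 E, tm_reach S eta1 eta2 Ci Cj E & tm_stop eta1 eta2 Ci Cj E N.

(* State of the process: current clusters, and those labelled "pure". *)
Definition state := ({set {set T}} * {set {set T}})%type.

Definition impure_wrt (Cstar : {set {set T}}) (D : {set T}) : Prop :=
  exists D1 D2, [/\ D1 \in Cstar, D2 \in Cstar, D1 != D2,
                    D :&: D1 != set0 & D :&: D2 != set0].

(* One edit request (split or merge, as allowed in the eta-merge model)
   followed by the corresponding algorithm update. *)
Definition step (S : T -> T -> R) (Cstar : {set {set T}}) (eta : R)
    (s s' : state) : Prop :=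
  let: (P, Pu) := s in
  (exists Ci A B, [/\ Ci \in P, impure_wrt Cstar Ci, local_split S Ci A B &
      s' = ((P :\ Ci) :|: [set A; B], Pu :\ Ci :\ A :\ B)]) \/
  (exists Ci Cj N, [/\ Ci \in P, Cj \in P & Ci != Cj] /\ [/\
      (exists2 Cl, Cl \in Cstar & eta * #|Ci|%:R <= #|Ci :&: Cl|%:R /\
                                  eta * #|Cj|%:R <= #|Cj :&: Cl|%:R),
      threshold_merge S (if Ci \in Pu then 1 else eta)
                        (if Cj \in Pu then 1 else eta) Ci Cj N &
      s' = (((P :\ Ci :\ Cj) :|: [set Ci :\: N; Cj :\: N; N]) :\ set0,
            ((Pu :\ Ci :\ Cj) :|: [set N]
               :|: (if Ci \in Pu then [set Ci :\: N] else set0)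
               :|: (if Cj \in Pu then [set Cj :\: N] else set0)) :\ set0)]).

(* log_{1/(1-eta)} n, taken to be 0 when eta >= 1 (infinite base). *)
Definition log_factor (eta : R) (n : nat) : R :=
  if eta < 1 then ln (n%:R) / ln ((1 - eta)^-1) else 0.

End Clustering.

(* Main.v *)
Require Import Defs.
From HB Require Import structures.
From mathcomp Require Import all_boot all_order all_algebra.
From mathcomp Require Import reals exp.
From Stdlib Require Import Classical.
From mathcomp Require Import zify lra.
Set Implicit Arguments. Unset Strict Implicit. Unset Printing Implicit Defensive.
Import Order.TTheory GRing.Theory Num.Theory.
Local Open Scope ring_scope.

Section LF.
Variables (R : realType) (T : finType) (eta : R).
Hypotheses (he0 : 0 < eta) (he1 : eta <= 1).

Lemma lnb_gt0 : eta < 1 -> 0 < ln ((1 - eta)^-1).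
Proof.
move=> h; apply: ln_gt0; rewrite invf_gt1 ?subr_gt0 //.
by rewrite ltrBlDr ltrDl.
Qed.

Lemma lf_ge0 (s : nat) : (1 <= s)%N -> 0 <= log_factor eta s.
Proof.
move=> hs; rewrite /log_factor; case: ifP => // h.
by apply: divr_ge0; [apply: ln_ge0; rewrite ler1n | apply/ltW/lnb_gt0].
Qed.

Lemma lf_mono (s s' : nat) : (1 <= s)%N -> (s <= s')%N -> log_factor eta s <= log_factor eta s'.
Proof.
move=> hs hss; rewrite /log_factor; case: ifP => // h.
rewrite ler_pM2r ?invr_gt0 ?lnb_gt0 // ler_ln ?ler_nat // posrE ltr0n //.
exact: leq_trans hss.
Qed.

Lemma lf_dec (s s' : nat) : (1 <= s')%N -> s'%:R <= (1 - eta) * s%:R ->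
  log_factor eta s' + 1 <= log_factor eta s.
Proof.
move=> hs' hle; rewrite /log_factor.
have hs'R : (1 : R) <= s'%:R by rewrite ler1n.
case: (ltP eta 1) => h; last first.
  have E : eta = 1 by apply/eqP; rewrite eq_le he1 h.
  by move: (le_trans hs'R hle); rewrite E subrr mul0r ler10.
have hc := lnb_gt0 h.
have h1e : 0 < 1 - eta by rewrite subr_gt0.
have hsp : (0 : R) < s%:R.
  case: s hle => [|s0] hle; last by rewrite ltr0n.
  by move: (le_trans hs'R hle); rewrite mulr0 ler10.
have hl : ln (s'%:R) <= ln ((1 - eta) * s%:R).
  by rewrite ler_ln // posrE ?mulr_gt0 // (lt_le_trans ltr01 hs'R).
rewrite lnM ?posrE // in hl.
rewrite lnV ?posrE // in hc *.
rewrite -[X in _ + X <= _](@divff _ (- ln (1 - eta))) ?gt_eqF // -mulrDl.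
rewrite ler_pM2r ?invr_gt0 //.
by rewrite lerBlDl.
Qed.

Definition phi (eta : R) (X : {set T}) : R := if X == set0 then 0 else 1 + log_factor eta #|X|.
End LF.

Section Basics.
Variables (R : realType) (T : finType) (S : T -> T -> R) (Cstar : {set {set T}}).
Hypothesis HC : clustering Cstar.

Definition pure (X : {set T}) := exists2 l, l \in Cstar & X \subset l.
Definition tg (X : {set T}) := [set l in Cstar | X :&: l != set0].
Definition tc X := #|tg X|.

Lemma cstar_eq l1 l2 x : l1 \in Cstar -> l2 \in Cstar -> x \in l1 -> x \in l2 -> l1 = l2.
Proof.
move=> H1 H2 x1 x2; case/and3P: HC => _ /trivIsetP Ht _.
apply/eqP; apply: contraT => ne.
by have := disjointFr (Ht _ _ H1 H2 ne) x1; rewrite x2.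
Qed.

Lemma cstar_cov x : exists2 l, l \in Cstar & x \in l.
Proof.
case/and3P: HC => /eqP Hc _ _.
have : x \in cover Cstar by rewrite Hc inE.
by case/bigcupP => l Hl xl; exists l.
Qed.

Lemma hit_eq (X : {set T}) l l' : l \in Cstar -> l' \in Cstar -> X \subset l' -> X :&: l != set0 -> l = l'.
Proof.
move=> Hl Hl' sub /set0Pn [x]; rewrite inE => /andP [xX xl].
apply: (cstar_eq Hl Hl' xl); exact: (subsetP sub).
Qed.

Lemma tc_ge1 (X : {set T}) : X != set0 -> (1 <= tc X)%N.
Proof.
case/set0Pn => x xX; have [l Hl xl] := cstar_cov x.
rewrite /tc card_gt0; apply/set0Pn; exists l; rewrite inE Hl /=.
by apply/set0Pn; exists x; rewrite inE xX.
Qed.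

Lemma tc_pure X : pure X -> (tc X <= 1)%N.
Proof.
case=> l Hl sub; rewrite /tc -(cards1 l); apply: subset_leq_card.
apply/subsetP => l'; rewrite /tg !inE => /andP [Hl' hit].
by rewrite (hit_eq Hl' Hl sub hit).
Qed.

Lemma tg_sub (X Y : {set T}) : X \subset Y -> tg X \subset tg Y.
Proof.
move=> sub; apply/subsetP => l; rewrite /tg !inE => /andP [-> /set0Pn [x]].
rewrite inE => /andP [xX xl]; apply/set0Pn; exists x.
by rewrite inE xl (subsetP sub).
Qed.

Lemma tc_sub (X Y : {set T}) : X \subset Y -> (tc X <= tc Y)%N.
Proof. by move=> sub; apply: subset_leq_card; apply: tg_sub. Qed.

Lemma impure_not_pure D : impure_wrt Cstar D -> ~ pure D.
Proof.
case=> D1 [D2 [H1 H2 ne h1 h2]] [l Hl sub].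
by move: ne; rewrite (hit_eq H1 Hl sub h1) (hit_eq H2 Hl sub h2) eqxx.
Qed.


Variable t : R.
Hypothesis Hin : forall x y, (exists2 D, D \in Cstar & (x \in D) && (y \in D)) -> S x y > t.
Hypothesis Hout : forall x y, ~ (exists2 D, D \in Cstar & (x \in D) && (y \in D)) -> S x y <= t.

Lemma sum_bound (A B : {set T}) (c : R) :
  (forall x y, x \in A -> y \in B -> S x y <= c) ->
  \sum_(x in A) \sum_(y in B) S x y <= c * (#|A| * #|B|)%:R.
Proof.
move=> H.
apply: (@le_trans _ _ (\sum_(x in A) \sum_(y in B) c)).
  by apply: ler_sum => x xA; apply: ler_sum => y yB; apply: H.
under eq_bigr do rewrite sumr_const.
by rewrite sumr_const -mulrnA mulr_natr mulnC.
Qed.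

Lemma sum_boundl (A B : {set T}) (c : R) :
  (forall x y, x \in A -> y \in B -> c < S x y) ->
  c * (#|A| * #|B|)%:R <= \sum_(x in A) \sum_(y in B) S x y.
Proof.
move=> H.
apply: (@le_trans _ _ (\sum_(x in A) \sum_(y in B) c)); last first.
  by apply: ler_sum => x xA; apply: ler_sum => y yB; apply/ltW/H.
under eq_bigr do rewrite sumr_const.
by rewrite sumr_const -mulrnA mulr_natr mulnC.
Qed.

Lemma cardM_gt0 (A B : {set T}) : A != set0 -> B != set0 -> (0 < (#|A| * #|B|)%:R :> R).
Proof.
move=> hA hB; rewrite ltr0n muln_gt0 !card_gt0; by apply/andP.
Qed.

Lemma avg_gt (A B l : {set T}) : A != set0 -> B != set0 -> l \in Cstar ->
  A \subset l -> B \subset l -> t < avg_sim S A B.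
Proof.
move=> hA hB Hl sA sB; have hp := cardM_gt0 hA hB.
case/set0Pn: hA => a aA; case/set0Pn: hB => b bB.
rewrite /avg_sim ltr_pdivlMr //.
have -> : t * (#|A| * #|B|)%:R = \sum_(x in A) \sum_(y in B) t.
  under eq_bigr do rewrite sumr_const.
  by rewrite sumr_const -mulrnA mulr_natr mulnC.
apply: ltr_sum; first by apply/hasP; exists a; rewrite ?mem_index_enum.
move=> x xA; apply: ltr_sum; first by apply/hasP; exists b; rewrite ?mem_index_enum.
move=> y yB; apply: Hin; exists l => //; apply/andP; split; [exact: (subsetP sA) | exact: (subsetP sB)].
Qed.

Lemma avg_le (A B l1 l2 : {set T}) : A != set0 -> B != set0 -> l1 \in Cstar ->
  l2 \in Cstar -> l1 != l2 ->
  A \subset l1 -> B \subset l2 -> avg_sim S A B <= t.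
Proof.
move=> hA hB H1 H2 ne sA sB; have hp := cardM_gt0 hA hB.
rewrite /avg_sim ler_pdivrMr //; apply: sum_bound => x y xA yB.
apply: Hout => -[D HD /andP [xD yD]].
move: ne; rewrite -(cstar_eq HD H1 xD (subsetP sA _ xA)).
by rewrite -(cstar_eq HD H2 yD (subsetP sB _ yB)) eqxx.
Qed.

Definition case2 (Q : {set {set T}}) := forall X Y l, X \in Q -> Y \in Q -> X != Y ->
  l \in Cstar -> X :&: l != set0 -> Y :&: l == set0.

Definition alinv (D : {set T}) (Q : {set {set T}}) :=
  [/\ (forall X, X \in Q -> X != set0), (forall X, X \in Q -> X \subset D),
      (forall x, x \in D -> exists2 X, X \in Q & x \in X) &
      ((forall X, X \in Q -> pure X) \/ case2 Q)].

Lemma memQ' (Q : {set {set T}}) A B X :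
  X \in (Q :\ A :\ B) :|: [set A :|: B] -> (X = A :|: B) \/ [/\ X \in Q, X != A & X != B].
Proof.
rewrite !inE => /orP [/andP [nB /andP [nA XQ]] | /eqP ->]; last by left.
by right.
Qed.

Lemma pure_nopair (Q : {set {set T}}) : (forall X, X \in Q -> pure X) ->
  ~ (exists X Y l, [/\ X \in Q, Y \in Q, X != Y, l \in Cstar & X \subset l /\ Y \subset l]) ->
  case2 Q.
Proof.
move=> Hp Hn X Y l XQ YQ ne Hl hX; apply: contraT => hY; exfalso; apply: Hn.
have [lx Hlx sX] := Hp X XQ; have [ly Hly sY] := Hp Y YQ.
exists X, Y, l; split => //.
split; [by rewrite (hit_eq Hl Hlx sX hX) | by rewrite (hit_eq Hl Hly sY hY)].
Qed.

Lemma case2_step (Q : {set {set T}}) A B : case2 Q -> A \in Q -> B \in Q ->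
  case2 ((Q :\ A :\ B) :|: [set A :|: B]).
Proof.
move=> H2 AQ BQ X Y l /memQ' HX /memQ' HY ne Hl hX.
case: HX => [EX | [XQ nXA nXB]]; case: HY => [EY | [YQ nYA nYB]].
- by move: ne; rewrite EX EY eqxx.
- move: hX; rewrite EX setIUl => hX.
  case: (boolP (A :&: l == set0)) => hA.
  + move: hX; rewrite (eqP hA) set0U => hB.
    by apply: (H2 B Y l) => //; rewrite eq_sym.
  + by apply: (H2 A Y l) => //; rewrite eq_sym.
- rewrite EY setIUl; apply/eqP; apply/setP => z.
  have /eqP hA := H2 X A l XQ AQ nXA Hl hX.
  have /eqP hB := H2 X B l XQ BQ nXB Hl hX.
  by rewrite hA hB setU0.
- exact: (H2 X Y l).
Qed.

Lemma al_inv (D : {set T}) Q0 : al_reach S D Q0 -> alinv D Q0.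
Proof.
elim => [|Q Q' _ [H0 Hs Hc Hj] [A [B [AQ BQ nAB Hmax EQ']]]].
  split.
  - by move=> X /imsetP [x _ ->]; apply/set0Pn; exists x; rewrite set11.
  - by move=> X /imsetP [x xD ->]; rewrite sub1set.
  - by move=> x xD; exists [set x]; [apply: imset_f | rewrite set11].
  - left => X /imsetP [x _ ->]; have [l Hl xl] := cstar_cov x.
    by exists l; rewrite // sub1set.
subst Q'; split.
- move=> X /memQ' [->|[XQ _ _]]; last exact: H0.
  apply/set0Pn; case/set0Pn: (H0 A AQ) => a aA; exists a; by rewrite inE aA.
- move=> X /memQ' [->|[XQ _ _]]; last exact: Hs.
  by rewrite subUset Hs ?Hs.
- move=> x /Hc [X XQ xX].
  case: (boolP (X == A)) => [/eqP EA | nA].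
    by exists (A :|: B); rewrite !inE ?eqxx ?orbT // -EA xX.
  case: (boolP (X == B)) => [/eqP EB | nB].
    by exists (A :|: B); rewrite !inE ?eqxx ?orbT // -EB xX orbT.
  by exists X => //; rewrite !inE nA nB XQ.
- case: Hj => [Hp | H2]; last by right; apply: case2_step.
  case: (classic (exists X Y l, [/\ X \in Q, Y \in Q, X != Y, l \in Cstar & X \subset l /\ Y \subset l])).
  + move=> [X [Y [l [XQ YQ nXY Hl [sX sY]]]]].
    have h1 := avg_gt (H0 X XQ) (H0 Y YQ) Hl sX sY.
    have h2 := Hmax X Y XQ YQ nXY.
    have [la Hla sA] := Hp A AQ; have [lb Hlb sB] := Hp B BQ.
    case: (boolP (la == lb)) => [/eqP Eab | nab]; last first.
      have := avg_le (H0 A AQ) (H0 B BQ) Hla Hlb nab sA sB.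
      by move=> h3; have := lt_le_trans h1 (le_trans h2 h3); rewrite ltxx.
    left => Z /memQ' [->|[ZQ _ _]]; last exact: Hp.
    by exists la; rewrite // subUset sA Eab sB.
  + by move=> Hn; right; apply: case2_step => //; apply: pure_nopair.
Qed.

Lemma split_ok D A B : impure_wrt Cstar D -> local_split S D A B ->
  [/\ A != set0, B != set0, A \subset D, B \subset D & (tc A + tc B <= tc D)%N].
Proof.
move=> Himp [nAB /al_inv [H0 Hs Hc Hj]].
have AQ : A \in [set A; B] by rewrite !inE eqxx.
have BQ : B \in [set A; B] by rewrite !inE eqxx orbT.
split; [exact: H0 | exact: H0 | exact: Hs | exact: Hs |].
have disj : tg A :&: tg B = set0.
  apply/setP => l; rewrite !inE; apply/negP => /andP [/andP [Hl hA] /andP [_ hB]].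
  case: Hj => [Hp | H2]; last by move: hB; rewrite (H2 A B l).
  have [la Hla sA] := Hp A AQ; have [lb Hlb sB] := Hp B BQ.
  have Ea := hit_eq Hl Hla sA hA; have Eb := hit_eq Hl Hlb sB hB.
  apply: (impure_not_pure Himp); exists l => //; apply/subsetP => x /Hc [X].
  rewrite !inE => /orP [/eqP -> | /eqP ->] xX.
    by rewrite Ea (subsetP sA).
  by rewrite Eb (subsetP sB).
rewrite /tc -[(_ + _)%N]subn0 -(cards0 {set T}) -disj -cardsU.
by apply: subset_leq_card; rewrite subUset !tg_sub ?Hs.
Qed.

Definition samec x y := exists2 D, D \in Cstar & (x \in D) && (y \in D).
Definition wedge (E : {set T * T}) := forall a b, (a, b) \in E -> samec a b.

Lemma frac_nonempty (eta : R) (C Cl : {set T}) : 0 < eta -> C != set0 ->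
  eta * #|C|%:R <= #|C :&: Cl|%:R -> C :&: Cl != set0.
Proof.
move=> he hC hf; rewrite -card_gt0 -(ltr0n R); apply: lt_le_trans hf.
by rewrite mulr_gt0 // ltr0n card_gt0.
Qed.

Lemma frac_ok (eta e : R) (C Cl N : {set T}) : 
  C != set0 -> Cl \in Cstar -> eta * #|C|%:R <= #|C :&: Cl|%:R ->
  (e = eta \/ (e = 1 /\ pure C)) -> 0 < eta ->
  (forall y, y \in C -> y \in Cl -> y \in N) -> e * #|C|%:R <= #|N :&: C|%:R.
Proof.
move=> hC Hl hf He heta HN.
have sub : C :&: Cl \subset N :&: C.
  by apply/subsetP => y; rewrite !inE => /andP [yC yl]; rewrite yC HN.
case: He => [-> | [-> [l' Hl' sC]]].
  by apply: (le_trans hf); rewrite ler_nat subset_leq_card.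
have El := hit_eq Hl Hl' sC (frac_nonempty heta hC hf).
rewrite mul1r ler_nat; apply: subset_leq_card; apply/subsetP => y yC.
by rewrite inE yC HN // El (subsetP sC).
Qed.

Lemma tm_ok (eta : R) (Ci Cj N : {set T}) (e1 e2 : R) Cl :
  0 < eta -> Ci != set0 -> Cj != set0 -> Cl \in Cstar ->
  eta * #|Ci|%:R <= #|Ci :&: Cl|%:R -> eta * #|Cj|%:R <= #|Cj :&: Cl|%:R ->
  (e1 = eta \/ (e1 = 1 /\ pure Ci)) -> (e2 = eta \/ (e2 = 1 /\ pure Cj)) ->
  threshold_merge S e1 e2 Ci Cj N -> pure N /\ N != set0.
Proof.
move=> heta hCi hCj Hl fi fj He1 He2 [E Hr [[x xU ->] _]].
have Hw : wedge E.
  elim: Hr => [a b|E0 E' _ IH nostop [x0 [y0 [[xU0 yU0 nxy nedge Hmax] ->]]]].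
    by rewrite inE.
  move=> a b; rewrite in_setU in_set1 => /orP [/eqP [-> ->] | /IH //].
  case: (classic (samec x0 y0)) => // Hnot; exfalso.
  have Hall : forall x' y', x' \in Ci :|: Cj -> y' \in Ci :|: Cj -> x' != y' ->
      samec x' y' -> edge_rel E0 x' y'.
    move=> x' y' xU' yU' nxy' hs; apply: contraT => ne.
    have := Hmax x' y' xU' yU' nxy' ne; have := Hin hs; have := Hout Hnot.
    by move=> h1 h2 h3; have := lt_le_trans h2 (le_trans h3 h1); rewrite ltxx.
  case/set0Pn: (frac_nonempty heta hCi fi) => z; rewrite inE => /andP [zCi zl].
  apply: (nostop (component E0 z)); split.
    by exists z; rewrite // inE zCi.
  have HN : forall y, y \in Ci :|: Cj -> y \in Cl -> y \in component E0 z.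
    move=> y yU yl; rewrite inE; case: (boolP (z == y)) => [/eqP -> | nzy].
      exact: connect0.
    by apply: connect1; apply: Hall => //; [rewrite inE zCi | exists Cl => //; rewrite zl yl].
  split.
    by apply: (frac_ok hCi Hl fi He1 heta) => y yC; apply: HN; rewrite inE yC.
  by apply: (frac_ok hCj Hl fj He2 heta) => y yC; apply: HN; rewrite inE yC orbT.
have [l Hl' xl] := cstar_cov x.
split; last by apply/set0Pn; exists x; rewrite inE connect0.
exists l => //; apply/subsetP => y; rewrite inE => hc.
have cl : closed (edge_rel E) (mem l).
  move=> a b /orP [] /Hw [D HD /andP [aD bD]];
  (apply/idP/idP => h; first [ by rewrite (cstar_eq Hl' HD h aD) | by rewrite (cstar_eq Hl' HD h bD)]; rewrite inE in h; first [ by rewrite inE -(cstar_eq HD Hl' aD h) | by rewrite inE -(cstar_eq HD Hl' bD h)]).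
by rewrite -(closed_connect cl hc).
Qed.

Lemma trivI_uniq (P : {set {set T}}) : trivIset P ->
  forall x A B, A \in P -> B \in P -> x \in A -> x \in B -> A = B.
Proof.
move=> /trivIsetP Ht x A B AP BP xA xB; apply/eqP; apply: contraT => ne.
by have := disjointFr (Ht _ _ AP BP ne) xA; rewrite xB.
Qed.

Lemma mk_part (P : {set {set T}}) : set0 \notin P ->
  (forall x, exists2 A, A \in P & x \in A) ->
  (forall x A B, A \in P -> B \in P -> x \in A -> x \in B -> A = B) ->
  clustering P.
Proof.
move=> H0 Hc Hu; apply/and3P; split => //.
  apply/eqP/setP => x; rewrite inE; have [A AP xA] := Hc x.
  by apply/bigcupP; exists A.
apply/trivIsetP => A B AP BP ne; rewrite -setI_eq0; apply/eqP/setP => x.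
rewrite !inE; apply/negP => /andP [xA xB].
by move: ne; rewrite (Hu x A B AP BP xA xB) eqxx.
Qed.

Definition Phi (C : {set {set T}}) := (\sum_(X in C) tc X)%N.

Lemma Phi_ge C : clustering C -> (#|C| <= Phi C)%N.
Proof.
case/and3P => _ _ H0; rewrite -sum1_card; apply: leq_sum => X XC.
by apply: tc_ge1; apply: contraNneq H0 => <-.
Qed.

Lemma tc1_sub X l : (tc X <= 1)%N -> l \in tg X -> X \subset l.
Proof.
move=> h1 hl; apply/subsetP => x xX; have [l' Hl' xl'] := cstar_cov x.
have hl' : l' \in tg X by rewrite /tg inE Hl'; apply/set0Pn; exists x; rewrite inE xX.
have : (#|[set l; l']| <= 1)%N by apply: leq_trans h1; apply: subset_leq_card; rewrite subUset !sub1set hl hl'.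
rewrite cards2; case: eqP => [-> //|]; by [].
Qed.

Lemma card_split (C : {set {set T}}) X a b : X \in C ->
  (#|(C :\ X) :|: [set a; b]| <= #|C| + 1)%N.
Proof.
move=> XC; have h1 := leq_card_setU (C :\ X) [set a; b]; move: h1 => [h1 _].
have h2 : (#|[set a; b]| <= 2)%N by rewrite cards2; case: (a == b).
have h3 := cardsD1 X C; rewrite XC /= in h3.
rewrite h3 add1n addn1 -addn2; apply: leq_trans h1 _; by rewrite leq_add2l.
Qed.

Lemma card_merge (C : {set {set T}}) X Y : X \in C -> Y \in C -> X != Y ->
  (#|(C :\ X :\ Y) :|: [set X :|: Y]| + 1 <= #|C|)%N.
Proof.
move=> XC YC ne; have h1 := leq_card_setU (C :\ X :\ Y) [set X :|: Y]; move: h1 => [h1 _].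
have h3 := cardsD1 X C; rewrite XC /= in h3.
have h4 := cardsD1 Y (C :\ X); rewrite !inE eq_sym ne YC in h4.
rewrite cards1 in h1; simpl in h4; rewrite h3 h4. by rewrite addn1 add1n ltnS addnC.
Qed.

Lemma two_tg X : (1 < tc X)%N -> exists l l', [/\ l \in tg X, l' \in tg X & l != l'].
Proof.
move=> h; have : (0 < #|tg X|)%N by apply: leq_trans h.
rewrite card_gt0 => /set0Pn [l hl].
have : (0 < #|tg X :\ l|)%N by have := cardsD1 l (tg X); rewrite hl /= => E; move: h; rewrite /tc E.
rewrite card_gt0 => /set0Pn [l']; rewrite !inE => /andP [ne hl'].
by exists l, l'; split; rewrite // ?inE // eq_sym.
Qed.

Lemma tg_inE X l : (l \in tg X) = (l \in Cstar) && (X :&: l != set0).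
Proof. by rewrite /tg inE. Qed.

Lemma split_clust (C : {set {set T}}) (X l : {set T}) : clustering C -> X \in C -> X :&: l != set0 -> X :\: l != set0 ->
  clustering ((C :\ X) :|: [set X :&: l; X :\: l]).
Proof.
move=> HCl XC ha hb; have HCl' := HCl; case/and3P: HCl' => /eqP Hcov Htriv H0.
have Hu := trivI_uniq Htriv.
have Hloc : forall Z x, Z \in (C :\ X) :|: [set X :&: l; X :\: l] -> x \in Z ->
    (x \in X -> Z = if x \in l then X :&: l else X :\: l) /\ (x \notin X -> Z \in C).
  move=> Z x; rewrite !inE => /orP [/andP [nZ ZC] | /orP [/eqP -> | /eqP ->]] xZ.
  - split => // xX; by move: nZ; rewrite (Hu x Z X ZC XC xZ xX) eqxx.
  - by move: xZ; rewrite inE => /andP [xX xl]; rewrite xX xl.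
  - by move: xZ; rewrite inE => /andP [xl xX]; rewrite xX (negbTE xl).
apply: mk_part.
- rewrite !inE negb_or !negb_and; apply/andP; split.
    by rewrite H0 orbT.
  by rewrite negb_or eq_sym ha eq_sym hb.
- move=> x; have : x \in cover C by rewrite Hcov inE.
  case/bigcupP => Z ZC xZ; case: (boolP (Z == X)) => [/eqP EZ | nZ].
    case: (boolP (x \in l)) => xl.
      by exists (X :&: l); rewrite !inE ?eqxx ?orbT // -EZ xZ.
    by exists (X :\: l); rewrite !inE ?eqxx ?orbT // -EZ xZ xl.
  by exists Z; rewrite // !inE nZ ZC.
- move=> x A B HA HB xA xB.
  have [hA1 hA2] := Hloc A x HA xA; have [hB1 hB2] := Hloc B x HB xB.
  case: (boolP (x \in X)) => xX; first by rewrite hA1 // hB1.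
  exact: (Hu x A B (hA2 xX) (hB2 xX) xA xB).
Qed.

Lemma tc_union_bound (X a b : {set T}) : X \subset a :|: b -> (tc X <= tc a + tc b)%N.
Proof.
move=> sub; apply: leq_trans (leq_card_setU (tg a) (tg b)).1.
apply: subset_leq_card; apply/subsetP => l; rewrite !tg_inE => /andP [Hl /set0Pn [z]].
rewrite inE => /andP [zX zl]; have := subsetP sub z zX; rewrite !inE => /orP [za|zb].
  by apply/orP; left; rewrite Hl; apply/set0Pn; exists z; rewrite inE za.
by apply/orP; right; rewrite ?tg_inE Hl; apply/set0Pn; exists z; rewrite inE zb.
Qed.

Lemma split_Phi (C : {set {set T}}) (X l : {set T}) : clustering C -> X \in C ->
  X :&: l != set0 -> X :\: l != set0 ->
  (Phi C <= Phi ((C :\ X) :|: [set X :&: l; X :\: l]))%N.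
Proof.
move=> HCl XC ha hb; case/and3P: HCl => _ Htriv _; have Hu := trivI_uniq Htriv.
have -> : (C :\ X) :|: [set X :&: l; X :\: l] = (X :&: l) |: ((X :\: l) |: (C :\ X)).
  by apply/setP => Z; rewrite !inE orbC orbA.
case/set0Pn: ha => za; rewrite inE => /andP [zaX zal].
case/set0Pn: hb => zb; rewrite inE => /andP [zbl zbX].
have hbn : X :\: l \notin C :\ X.
  rewrite !inE negb_and negbK; apply/orP; case: (boolP (X :\: l \in C)) => h; last by right.
  by left; apply/eqP; apply: (Hu zb _ _ h XC); rewrite // inE zbl.
have han : X :&: l \notin (X :\: l) |: (C :\ X).
  rewrite !inE negb_or negb_and negbK; apply/andP; split.
    apply/eqP => E; have : za \in X :\: l by rewrite -E inE zaX zal.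
    by rewrite inE zal.
  case: (boolP (X :&: l \in C)) => h; last by rewrite orbT.
  by apply/orP; left; apply/eqP; apply: (Hu za _ _ h XC); rewrite // inE zaX zal.
rewrite /Phi big_setU1 //= big_setU1 //= (big_setD1 _ XC) /= addnA leq_add2r.
by apply: tc_union_bound; rewrite setID subxx.
Qed.

Lemma merge_clust (C : {set {set T}}) (X Y : {set T}) : clustering C -> X \in C -> Y \in C ->
  X != Y -> clustering ((C :\ X :\ Y) :|: [set X :|: Y]).
Proof.
move=> HCl XC YC nXY; have HCl' := HCl; case/and3P: HCl' => /eqP Hcov Htriv H0.
have Hu := trivI_uniq Htriv.
have Hloc : forall Z x, Z \in (C :\ X :\ Y) :|: [set X :|: Y] -> x \in Z ->
    (x \in X :|: Y -> Z = X :|: Y) /\ (x \notin X :|: Y -> Z \in C).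
  move=> Z x; rewrite !inE => /orP [/andP [nY /andP [nX ZC]] | /eqP ->] xZ. 2: { by split => //; rewrite inE in xZ; rewrite xZ. }
  split => // /orP [xX | xY].
    by move: nX; rewrite (Hu x Z X ZC XC xZ xX) eqxx.
  by move: nY; rewrite (Hu x Z Y ZC YC xZ xY) eqxx.
apply: mk_part.
- rewrite !inE negb_or !negb_and; apply/andP; split.
    by rewrite H0 !orbT.
  apply/eqP => E; move: H0; have : X \subset set0 by rewrite E subsetUl.
  by rewrite subset0 => /eqP <-; rewrite XC.
- move=> x; have : x \in cover C by rewrite Hcov inE.
  case/bigcupP => Z ZC xZ; case: (boolP (Z == X)) => [/eqP EZ | nX].
    by exists (X :|: Y); rewrite !inE ?eqxx ?orbT // -EZ xZ.
  case: (boolP (Z == Y)) => [/eqP EZ | nY].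
    by exists (X :|: Y); rewrite !inE ?eqxx ?orbT // -EZ xZ orbT.
  by exists Z; rewrite // !inE nX nY ZC.
- move=> x A B HA HB xA xB.
  have [hA1 hA2] := Hloc A x HA xA; have [hB1 hB2] := Hloc B x HB xB.
  case: (boolP (x \in X :|: Y)) => xX; first by rewrite hA1 // hB1.
  exact: (Hu x A B (hA2 xX) (hB2 xX) xA xB).
Qed.

Lemma merge_Phi (C : {set {set T}}) (X Y : {set T}) : clustering C -> X \in C -> Y \in C ->
  X != Y -> (tc X <= 1)%N -> (tc Y <= 1)%N ->
  (Phi C <= Phi ((C :\ X :\ Y) :|: [set X :|: Y]) + 1)%N.
Proof.
move=> HCl XC YC nXY h1 h2; case/and3P: HCl => _ Htriv H0; have Hu := trivI_uniq Htriv.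
have XY0 : X != set0 by apply: contraNneq H0 => <-.
case/set0Pn: (XY0) => z zX.
have -> : (C :\ X :\ Y) :|: [set X :|: Y] = (X :|: Y) |: (C :\ X :\ Y).
  by apply/setP => Z; rewrite !inE orbC.
have hn : X :|: Y \notin C :\ X :\ Y.
  rewrite !inE !negb_and !negbK; case: (boolP (X :|: Y \in C)) => h; last by rewrite !orbT.
  by rewrite (Hu z _ _ h XC) ?eqxx ?orbT // inE zX.
have YC' : Y \in C :\ X by rewrite !inE eq_sym nXY.
rewrite /Phi big_setU1 //= (big_setD1 _ XC) /= (big_setD1 _ YC') /=.
have h3 : (1 <= tc (X :|: Y))%N.
  by apply: tc_ge1; apply/set0Pn; exists z; rewrite inE zX.
move: (\sum_(i in _) _)%N => p; lia.
Qed.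

Lemma gamma_bound (gamma : {set {set T}} -> nat) : natural_clustering_error Cstar gamma ->
  forall C, clustering C -> (2 * Phi C <= gamma C + #|Cstar| + #|C|)%N.
Proof.
move=> [Hg1 Hg2].
suff H : forall g C, clustering C -> (gamma C < g)%N ->
    (2 * Phi C <= gamma C + #|Cstar| + #|C|)%N.
  by move=> C HCl; apply: (H (gamma C).+1).
elim=> [//|g IH] C HCl Hlt.
have HCl' := HCl; case/and3P: HCl' => /eqP Hcov Htriv H0.
have Hu := trivI_uniq Htriv.
have ne0 : forall X, X \in C -> X != set0 by move=> X XC; apply: contraNneq H0 => <-.
case: (classic (exists2 X, X \in C & (1 < tc X)%N)) => [[X XC h2]|Hno].
  have [l [l' [hl hl' nll]]] := two_tg h2.
  move: hl hl'; rewrite !tg_inE => /andP [Hl ha] /andP [Hl' /set0Pn [z]].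
  rewrite inE => /andP [zX zl'].
  have hb : X :\: l != set0.
    apply/set0Pn; exists z; rewrite !inE zX andbT; apply/negP => zl.
    by move: nll; rewrite (cstar_eq Hl Hl' zl zl') eqxx.
  have HC2 := split_clust HCl XC ha hb.
  have Hlt2 := Hg1 C HCl X l XC Hl ha hb.
  have IH2 := IH _ HC2 (leq_trans Hlt2 Hlt).
  have P2 := split_Phi HCl XC ha hb.
  have K2 := card_split (X :&: l) (X :\: l) XC.
  move: IH2 P2 K2 Hlt2; move: (Phi _) (Phi _) (gamma _) (gamma _) #|_| #|_| => a b c d e f.
  lia.
have Hle1 : forall X, X \in C -> (tc X <= 1)%N.
  by move=> X XC; rewrite leqNgt; apply/negP => h; apply: Hno; exists X.
case: (classic (exists X Y l, [/\ X \in C, Y \in C, X != Y, l \in Cstar & X \subset l /\ Y \subset l])).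
  move=> [X [Y [l [XC YC nXY Hl [sX sY]]]]].
  have HC2 := merge_clust HCl XC YC nXY.
  have Hlt2 := Hg2 C HCl X Y l XC YC nXY Hl sX sY.
  have IH2 := IH _ HC2 (leq_trans Hlt2 Hlt).
  have P2 := merge_Phi HCl XC YC nXY (Hle1 X XC) (Hle1 Y YC).
  have K2 := card_merge XC YC nXY.
  move: IH2 P2 K2 Hlt2; move: (Phi _) (Phi _) (gamma _) (gamma _) #|_| #|_| => a b c d e f.
  lia.
move=> Hnp.
have h1 : (Phi C <= #|C|)%N by rewrite -sum1_card; apply: leq_sum => X /Hle1.
pose f (X : {set T}) := odflt set0 [pick l in tg X].
have fP : forall X, X \in C -> f X \in tg X.
  move=> X XC; rewrite /f; case: pickP => [l //|].
  move=> h; have := tc_ge1 (ne0 X XC); rewrite /tc card_gt0 => /set0Pn [l].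
  by rewrite h.
have finj : {in C &, injective f}.
  move=> X Y XC YC E; apply: contra_eq (erefl true) => nXY; exfalso; apply: Hnp.
  have hX := fP X XC; have hY := fP Y YC; rewrite -E in hY.
  exists X, Y, (f X); split => //; first by move: hX; rewrite tg_inE => /andP [].
  by split; apply: tc1_sub => //; apply: Hle1.
have h2 : (#|C| <= #|Cstar|)%N.
  rewrite -(card_in_imset finj); apply: subset_leq_card; apply/subsetP => l.
  by case/imsetP => X XC ->; move: (fP X XC); rewrite tg_inE => /andP [].
move: h1 h2; move: (Phi _) #|_| #|_| (gamma C) => a b c d; lia.
Qed.

Variable eta : R.
Hypotheses (he0 : 0 < eta) (he1 : eta <= 1).

Definition M := Num.max 1 (log_factor eta #|T|).
Definition K := 1 + M.

Lemma M_ge1 : 1 <= M.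
Proof. by rewrite /M le_max lexx. Qed.

Lemma phi_ge0 (X : {set T}) : 0 <= phi eta X.
Proof.
rewrite /phi; case: ifP => // /negbT /set0Pn [x xX].
by rewrite addr_ge0 // lf_ge0 // card_gt0; apply/set0Pn; exists x.
Qed.

Lemma phi_le (X : {set T}) : phi eta X <= K.
Proof.
have hK : 0 <= K by rewrite /K addr_ge0 // (le_trans ler01 M_ge1).
rewrite /phi; case: ifP => // /negbT /set0Pn [x xX].
rewrite /K lerD2l /M le_max; apply/orP; right.
apply: lf_mono => //; first by rewrite card_gt0; apply/set0Pn; exists x.
by apply: max_card.
Qed.

Lemma phi_mono (A D : {set T}) : A \subset D -> phi eta A <= phi eta D.
Proof.
move=> sub; rewrite /phi; case: ifP => [_|/negbT /set0Pn [x xA]].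
  by case: ifP => // /negbT /set0Pn [y yD]; rewrite addr_ge0 // lf_ge0 // card_gt0; apply/set0Pn; exists y.
have xD := subsetP sub x xA.
have -> : (D == set0) = false by apply/negbTE/set0Pn; exists x.
rewrite lerD2l; apply: lf_mono => //; last by apply: subset_leq_card.
by rewrite card_gt0; apply/set0Pn; exists x.
Qed.

Lemma sumS_le (F : {set T} -> R) (A B : {set {set T}}) : (forall X, 0 <= F X) ->
  A \subset B -> \sum_(X in A) F X <= \sum_(X in B) F X.
Proof.
move=> hF sub; rewrite [X in _ <= X](big_setID A) /=.
have -> : B :&: A = A by apply/setIidPr.
by rewrite lerDl sumr_ge0.
Qed.

Lemma sumU_le (F : {set T} -> R) (A B : {set {set T}}) : (forall X, 0 <= F X) ->
  \sum_(X in A :|: B) F X <= \sum_(X in A) F X + \sum_(X in B) F X.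
Proof.
move=> hF; rewrite (big_setID A) /=.
have -> : (A :|: B) :&: A = A by apply/setIidPr; apply: subsetUl.
rewrite lerD2l; apply: sumS_le => //; apply/subsetP => X; rewrite !inE.
by case/andP => /negbTE -> /=.
Qed.

Lemma sum2_le (F : {set T} -> R) a b : (forall X, 0 <= F X) ->
  \sum_(X in [set a; b]) F X <= F a + F b.
Proof.
move=> hF; apply: le_trans (sumU_le _ _ hF) _.
by rewrite !big_set1.
Qed.

Lemma sum3_le (F : {set T} -> R) a b c : (forall X, 0 <= F X) ->
  \sum_(X in [set a; b; c]) F X <= F a + F b + F c.
Proof.
move=> hF; apply: le_trans (sumU_le _ _ hF) _.
by rewrite big_set1 lerD2r sum2_le.
Qed.

Lemma sum_D1 (F : {set T} -> R) (A : {set {set T}}) x :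
  \sum_(X in A) F X = (if x \in A then F x else 0) + \sum_(X in A :\ x) F X.
Proof.
case: ifP => h; first by rewrite (big_setD1 _ h).
by rewrite add0r; apply: eq_bigl => Z; rewrite !inE; case: eqP => // ->; rewrite h.
Qed.

Definition Pot (P Pu : {set {set T}}) := \sum_(X in P :\: Pu) phi eta X.
Definition Psi (P : {set {set T}}) : R := \sum_(X in P) ((tc X).-1)%:R.
Definition W (st : state T) : R := 2 * Pot st.1 st.2 + (#|st.2|)%:R + (2 * K + 1) * Psi st.1.
Definition Inv (st : state T) := set0 \notin st.1 /\ (forall X, X \in st.2 -> pure X).

Lemma K_ge0 : 0 <= 2 * K + 1.
Proof. by rewrite addr_ge0 // mulr_ge0 // /K addr_ge0 // (le_trans ler01 M_ge1). Qed.

Lemma fpos (X : {set T}) : 0 <= ((tc X).-1)%:R :> R.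
Proof. by []. Qed.

Lemma split_step P Pu D A B : Inv (P, Pu) -> D \in P -> impure_wrt Cstar D ->
  local_split S D A B ->
  Inv ((P :\ D) :|: [set A; B], Pu :\ D :\ A :\ B) /\
  W ((P :\ D) :|: [set A; B], Pu :\ D :\ A :\ B) + 1 <= W (P, Pu).
Proof.
move=> [H0 Hp] DP Himp Hls; have [hA hB sA sB htc] := split_ok Himp Hls.
split.
  split => /=; last by move=> X; rewrite !inE => /andP [_ /andP [_ /andP [_ /Hp]]].
  apply/negP; rewrite !inE => /orP [/andP [_ h] | /orP [/eqP E | /eqP E]]; [by rewrite h in H0 | by rewrite -E eqxx in hA | by rewrite -E eqxx in hB].
rewrite /W /=.
have hPsi1 : Psi ((P :\ D) :|: [set A; B]) <= Psi (P :\ D) + (((tc A).-1)%:R + ((tc B).-1)%:R).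
  apply: le_trans (sumU_le _ _ fpos) _; rewrite lerD2l; exact: sum2_le.
have hPsi2 : Psi P = ((tc D).-1)%:R + Psi (P :\ D) by rewrite /Psi (sum_D1 _ _ D) DP.
have hf : ((tc A).-1)%:R + ((tc B).-1)%:R + 1 <= ((tc D).-1)%:R :> R.
  have h1 := tc_ge1 hA; have h2 := tc_ge1 hB.
  rewrite -natrD natr1 ler_nat; move: h1 h2 htc; move: (tc A) (tc B) (tc D) => a b c; lia.
have DPu : D \notin Pu by apply/negP => /Hp; apply: impure_not_pure.
have hsub : ((P :\ D) :|: [set A; B]) :\: (Pu :\ D :\ A :\ B) \subset ((P :\ D) :\: Pu) :|: [set A; B].
  apply/subsetP => X; rewrite !inE.
  by case: (X == A); case: (X == B); rewrite ?orbT //= !orbF; case: (X == D); rewrite //= ?andbF.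
have hPot1 : Pot ((P :\ D) :|: [set A; B]) (Pu :\ D :\ A :\ B) <=
    Pot (P :\ D) Pu + (phi eta A + phi eta B).
  apply: le_trans (sumS_le phi_ge0 hsub) _.
  apply: le_trans (sumU_le _ _ phi_ge0) _; rewrite lerD2l; exact: (sum2_le _ _ phi_ge0).
have hPot2 : Pot P Pu = phi eta D + Pot (P :\ D) Pu.
  rewrite /Pot (sum_D1 _ _ D) inE DPu DP /=; congr (_ + _).
  by apply: eq_bigl => X; rewrite !inE andbCA.
have hA1 := phi_mono sA; have hB1 := phi_le B.
have hc : (#|Pu :\ D :\ A :\ B|%:R : R) <= #|Pu|%:R.
  by rewrite ler_nat; apply: subset_leq_card; apply/subsetP => X; rewrite !inE => /and3P [_ _ /andP [_ ->]].
have hP : (2 * K + 1) * Psi ((P :\ D) :|: [set A; B]) + (2 * K + 1) <= (2 * K + 1) * Psi P.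
  rewrite -[X in _ + X]mulr1 -mulrDr; apply: ler_wpM2l; first exact: K_ge0.
  rewrite hPsi2; move: hPsi1 hf; move: (Psi _) (Psi _) (_%:R) (_%:R) (_%:R) => a b c d e; lra.
move: hP hPot1 hPot2 hA1 hB1 hc.
set pp := (2 * K + 1) * Psi _; set qq := (2 * K + 1) * Psi _.
move=> h1 h2 h3 h4 h5 h6; lra.
Qed.


Lemma pure_sub (X Y : {set T}) : X \subset Y -> pure Y -> pure X.
Proof. by move=> s [l Hl sY]; exists l => //; apply: subset_trans sY. Qed.

Lemma rem_empty (C N : {set T}) : 1 * #|C|%:R <= #|N :&: C|%:R :> R -> C :\: N = set0.
Proof.
rewrite mul1r ler_nat => h.
have E : N :&: C = C.
  apply/eqP; rewrite eqEcard h andbT; exact: subsetIr.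
apply/setP => x; rewrite !inE; apply/negP => /andP [xN xC].
have : x \in N :&: C by rewrite E.
by rewrite inE (negbTE xN).
Qed.

Lemma rem_phi (C N : {set T}) : C != set0 -> eta * #|C|%:R <= #|N :&: C|%:R ->
  phi eta (C :\: N) + 1 <= phi eta C.
Proof.
move=> hC h; rewrite /phi (negbTE hC).
have hc1 : (1 <= #|C|)%N by rewrite card_gt0.
case: ifP => [_|/negbT hr].
  by rewrite add0r lerDl lf_ge0.
rewrite -addrA lerD2l; apply: (lf_dec he0 he1); first by rewrite card_gt0.
have E := cardsID N C; rewrite setIC in E.
rewrite -E natrD mulrBl mul1r; rewrite -E natrD in h; move: h; move: (_%:R) (_%:R) => a b; lra.
Qed.

Lemma fmono_l (X Y : {set T}) : X \subset Y -> ((tc X).-1)%:R <= ((tc Y).-1)%:R :> R.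
Proof. by move=> sXY; rewrite ler_nat -!subn1 leq_sub2r // tc_sub. Qed.

Lemma arith1 (x1 x2 x3 s0 fa fb fc fd : R) : x1 <= x2 -> x2 <= s0 + x3 -> x3 <= fa + fb ->
  fa <= fc -> fb <= fd -> x1 <= fc + (fd + s0).
Proof. move=> *; lra. Qed.

Lemma arith2 (p' s0 u v ai aj gi gj : R) : p' <= s0 + (u + v) -> u + ai <= gi -> v + aj <= gj ->
  p' + ai + aj <= gi + (gj + s0).
Proof. move=> *; lra. Qed.

Lemma arith3 (p p' c c' q q' : R) : p' + 1 <= p -> c' <= c + 1 -> q' <= q ->
  2 * p' + c' + q' + 1 <= 2 * p + c + q.
Proof. move=> *; lra. Qed.

Lemma arith4 (p p' c c' q q' : R) : p' + 0 + 0 <= p -> c' + 1 <= c -> q' <= q ->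
  2 * p' + c' + q' + 1 <= 2 * p + c + q.
Proof. move=> *; lra. Qed.

Lemma arith5 (p p' : R) : p' + 0 + 1 <= p -> p' + 1 <= p.
Proof. move=> *; lra. Qed.

Lemma arith6 (p p' a : R) : 0 <= a -> p' + 1 + a <= p -> p' + 1 <= p.
Proof. move=> *; lra. Qed.

Lemma merge_step P Pu (Ci Cj N : {set T}) : Inv (P, Pu) -> Ci \in P -> Cj \in P -> Ci != Cj ->
  (exists2 Cl, Cl \in Cstar & eta * #|Ci|%:R <= #|Ci :&: Cl|%:R /\
                              eta * #|Cj|%:R <= #|Cj :&: Cl|%:R) ->
  threshold_merge S (if Ci \in Pu then 1 else eta) (if Cj \in Pu then 1 else eta) Ci Cj N ->
  Inv (((P :\ Ci :\ Cj) :|: [set Ci :\: N; Cj :\: N; N]) :\ set0,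
       ((Pu :\ Ci :\ Cj) :|: [set N]
          :|: (if Ci \in Pu then [set Ci :\: N] else set0)
          :|: (if Cj \in Pu then [set Cj :\: N] else set0)) :\ set0) /\
  W (((P :\ Ci :\ Cj) :|: [set Ci :\: N; Cj :\: N; N]) :\ set0,
       ((Pu :\ Ci :\ Cj) :|: [set N]
          :|: (if Ci \in Pu then [set Ci :\: N] else set0)
          :|: (if Cj \in Pu then [set Cj :\: N] else set0)) :\ set0) + 1 <= W (P, Pu).
Proof.
move=> [H0 Hp] CiP CjP nij [Cl HCl [fi fj]] Htm.
have hCi : Ci != set0 by apply: contraNneq H0 => <-.
have hCj : Cj != set0 by apply: contraNneq H0 => <-.
have He1 : (if Ci \in Pu then 1 else eta) = eta \/ ((if Ci \in Pu then 1 else eta) = 1 /\ pure Ci).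
  by case: ifP => h; [right; split => //; apply: Hp | left].
have He2 : (if Cj \in Pu then 1 else eta) = eta \/ ((if Cj \in Pu then 1 else eta) = 1 /\ pure Cj).
  by case: ifP => h; [right; split => //; apply: Hp | left].
have [hNp hN0] := tm_ok he0 hCi hCj HCl fi fj He1 He2 Htm.
case: Htm => E _ [_ [g1 g2]].
have Ei : Ci \in Pu -> Ci :\: N = set0 by move=> h; apply: rem_empty; move: g1; rewrite h.
have Ej : Cj \in Pu -> Cj :\: N = set0 by move=> h; apply: rem_empty; move: g2; rewrite h.
have Ri : Ci \notin Pu -> phi eta (Ci :\: N) + 1 <= phi eta Ci.
  by move=> h; apply: rem_phi => //; move: g1; rewrite (negbTE h).
have Rj : Cj \notin Pu -> phi eta (Cj :\: N) + 1 <= phi eta Cj.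
  by move=> h; apply: rem_phi => //; move: g2; rewrite (negbTE h).
set P' := ((P :\ Ci :\ Cj) :|: [set Ci :\: N; Cj :\: N; N]) :\ set0.
set Pu' := ((Pu :\ Ci :\ Cj) :|: [set N]
          :|: (if Ci \in Pu then [set Ci :\: N] else set0)
          :|: (if Cj \in Pu then [set Cj :\: N] else set0)) :\ set0.
have mem_if : forall (b : bool) (X Y : {set T}), X \in (if b then [set Y] else set0) -> b /\ X = Y.
  by move=> b X Y; case: b; rewrite ?inE // => /eqP.
have memPu' : forall X, X \in Pu' -> [\/ X \in Pu :\ Ci :\ Cj, X = N, (Ci \in Pu /\ X = Ci :\: N) | (Cj \in Pu /\ X = Cj :\: N)].
  move=> X; rewrite /Pu' in_setD1 !in_setU => /andP [_ /orP [/orP [/orP [h|h]|h]|h]].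
  - by constructor 1.
  - by constructor 2; move: h; rewrite inE => /eqP.
  - by constructor 3; apply: mem_if h.
  - by constructor 4; apply: mem_if h.
have nzPu' : forall X, X \in Pu' -> X != set0 by move=> X; rewrite /Pu' in_setD1 => /andP [].
have NPu' : N \in Pu' by rewrite /Pu' in_setD1 hN0 !in_setU in_set1 eqxx !orbT.
have PuD : forall X, X \in Pu :\ Ci :\ Cj -> X \in Pu by move=> X; rewrite !inE => /and3P [_ _ ->].
split.
  split; first by rewrite /P' !inE eqxx.
  move=> X /memPu' [/PuD /Hp // | -> // | [h ->] | [h ->]].
    by apply: (pure_sub (subsetDl Ci N)); apply: Hp.
  by apply: (pure_sub (subsetDl Cj N)); apply: Hp.
rewrite /W /=.
have fN : ((tc N).-1)%:R = 0 :> R.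
  by have := tc_pure hNp; case: (tc N) => [|[|]].
have hPsi : Psi P' <= Psi P.
  have s1 : P' \subset (P :\ Ci :\ Cj) :|: [set Ci :\: N; Cj :\: N; N] by apply: subsetDl.
  have CjP' : Cj \in P :\ Ci by rewrite !inE eq_sym nij CjP.
  have e1 : Psi P = ((tc Ci).-1)%:R + (((tc Cj).-1)%:R + Psi (P :\ Ci :\ Cj)).
    by rewrite /Psi (sum_D1 _ P Ci) CiP (sum_D1 _ (P :\ Ci) Cj) CjP'.
  have b1 := sumS_le fpos s1.
  have b2 := sumU_le (P :\ Ci :\ Cj) [set Ci :\: N; Cj :\: N; N] fpos.
  have b3 := sum3_le (Ci :\: N) (Cj :\: N) N fpos.
  have b4 := fmono_l (subsetDl Ci N).
  have b5 := fmono_l (subsetDl Cj N).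
  rewrite e1; rewrite /Psi; rewrite fN in b3.
  rewrite addr0 in b3; exact: (arith1 b1 b2 b3 b4 b5).
have hP : (2 * K + 1) * Psi P' <= (2 * K + 1) * Psi P by apply: ler_wpM2l; [exact: K_ge0 |].

have hsub : P' :\: Pu' \subset ((P :\ Ci :\ Cj) :\: Pu) :|: [set Ci :\: N; Cj :\: N].
  apply/subsetP => X; rewrite in_setD => /andP [nPu].
  rewrite /P' in_setD1 => /andP [nz0]; rewrite in_setU => /orP [h|].
    move: h; rewrite in_setD1 in_setD1 => /andP [nj /andP [ni XP]].
    rewrite in_setU; apply/orP; left; rewrite !inE nj ni XP andbT.
    rewrite andbT; apply/negP => XPu; move/negP: nPu; apply; rewrite /Pu' in_setD1 nz0 !in_setU; apply/orP; left; apply/orP; left.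
    by apply/orP; left; rewrite !inE nj ni XPu.
  rewrite !inE => /orP [/orP [->|->]|/eqP EN]; rewrite ?orbT //.
  by move: nPu; rewrite EN NPu'.
have hPot1 : Pot P' Pu' <= Pot (P :\ Ci :\ Cj) Pu + (phi eta (Ci :\: N) + phi eta (Cj :\: N)).
  apply: le_trans (sumS_le phi_ge0 hsub) _.
  apply: le_trans (sumU_le _ _ phi_ge0) _; rewrite lerD2l; exact: (sum2_le _ _ phi_ge0).
have hPot2 : Pot P Pu = (if Ci \in Pu then 0 else phi eta Ci) +
    ((if Cj \in Pu then 0 else phi eta Cj) + Pot (P :\ Ci :\ Cj) Pu).
  rewrite /Pot (sum_D1 _ _ Ci) (sum_D1 _ (_ :\ Ci) Cj) !inE CiP CjP eq_sym nij /= !andbT.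
  have -> : \sum_(X in P :\: Pu :\ Ci :\ Cj) phi eta X = \sum_(X in P :\ Ci :\ Cj :\: Pu) phi eta X.
    by apply: eq_bigl => X; rewrite !inE; case: (X \in Pu); rewrite /= ?andbF.
  by case: (Ci \in Pu); case: (Cj \in Pu).
have Gi : phi eta (Ci :\: N) + (if Ci \in Pu then 0 else 1) <= (if Ci \in Pu then 0 else phi eta Ci).
  by case hi: (Ci \in Pu); [rewrite (Ei hi) /phi eqxx addr0 | apply: Ri; rewrite hi].
have Gj : phi eta (Cj :\: N) + (if Cj \in Pu then 0 else 1) <= (if Cj \in Pu then 0 else phi eta Cj).
  by case hj: (Cj \in Pu); [rewrite (Ej hj) /phi eqxx addr0 | apply: Rj; rewrite hj].
have hPot := arith2 hPot1 Gi Gj; rewrite -hPot2 in hPot.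
have hc1 : (#|Pu'|%:R : R) <= #|Pu|%:R + 1.
  rewrite natr1 ler_nat; apply: leq_trans (_ : #|N |: Pu| <= _)%N.
    apply: subset_leq_card; apply/subsetP => X XPu'; rewrite in_setU1.
    case: (memPu' X XPu') => [/PuD -> | -> | [h EX] | [h EX]]; rewrite ?eqxx ?orbT //.
      by move: (nzPu' X XPu'); rewrite EX (Ei h) eqxx.
    by move: (nzPu' X XPu'); rewrite EX (Ej h) eqxx.
  by rewrite cardsU1; case: (N \notin Pu).
have hc2 : Ci \in Pu -> Cj \in Pu -> (#|Pu'|%:R : R) + 1 <= #|Pu|%:R.
  move=> hi hj; rewrite natr1 ler_nat.
  have h1 : (#|Pu'| <= #|N |: (Pu :\ Ci :\ Cj)|)%N.
    apply: subset_leq_card; apply/subsetP => X XPu'; rewrite in_setU1.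
    case: (memPu' X XPu') => [-> | -> | [h EX] | [h EX]]; rewrite ?eqxx ?orbT //.
      by move: (nzPu' X XPu'); rewrite EX (Ei h) eqxx.
    by move: (nzPu' X XPu'); rewrite EX (Ej h) eqxx.
  have h2 := cardsU1 N (Pu :\ Ci :\ Cj).
  have h3 := cardsD1 Ci Pu; rewrite hi /= in h3.
  have h4 := cardsD1 Cj (Pu :\ Ci); rewrite !inE eq_sym nij hj /= in h4.
  rewrite h3 h4; apply: leq_ltn_trans h1 _; rewrite h2.
  by case: (N \notin _).
case hi: (Ci \in Pu) in hPot; case hj: (Cj \in Pu) in hPot.
- exact: (arith4 hPot (hc2 hi hj) hP).
- apply: (arith3 _ hc1 hP); exact: (arith5 hPot).
- apply: (arith3 _ hc1 hP); exact: (arith6 (lexx 0) hPot).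
- apply: (arith3 _ hc1 hP); exact: (arith6 ler01 hPot).
Qed.


Lemma step_W (st st' : state T) : Inv st -> step S Cstar eta st st' -> Inv st' /\ W st' + 1 <= W st.
Proof.
case: st => P Pu HI.
case => [[Ci [A [B [CiP Himp Hls ->]]]] | [Ci [Cj [N [[CiP CjP nij] [Hcl Htm ->]]]]]].
  exact: split_step.
exact: merge_step.
Qed.

Lemma W_ge0 st : 0 <= W st.
Proof.
rewrite /W; apply: addr_ge0; first apply: addr_ge0.
- by apply: mulr_ge0 => //; apply: sumr_ge0 => X _; apply: phi_ge0.
- by [].
- by apply: mulr_ge0; [exact: K_ge0 | apply: sumr_ge0].
Qed.

Lemma Phi_Psi C : clustering C -> (Phi C)%:R = Psi C + #|C|%:R :> R.
Proof.
case/and3P => _ _ H0; rewrite /Phi /Psi natr_sum -sum1_card natr_sum -big_split /=.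
apply: eq_bigr => X XC; rewrite -natrD addn1 prednK //.
by apply: tc_ge1; apply: contraNneq H0 => <-.
Qed.

Lemma W0_bound (C0 : {set {set T}}) : clustering C0 ->
  W (C0, set0) <= (2 * K + 1) * (Phi C0)%:R.
Proof.
move=> HC0; rewrite /W /= cards0 addr0 (Phi_Psi HC0) /Pot setD0.
have h1 : \sum_(X in C0) phi eta X <= K * #|C0|%:R.
  apply: le_trans (_ : \sum_(X in C0) K <= _); first by apply: ler_sum => X _; apply: phi_le.
  by rewrite sumr_const mulr_natr.
have h2 : 0 <= Psi C0 by apply: sumr_ge0.
have hK : 1 <= K by rewrite /K lerDl (le_trans ler01 M_ge1).
have h3 : (0 : R) <= #|C0|%:R by [].
move: h1 h2 hK h3; move: (\sum_(X in C0) _) (Psi C0) (#|C0|%:R) K => a b c k.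
move=> h1 h2 hK h3; nra.
Qed.

Lemma run_bound (gamma : {set {set T}} -> nat) (C0 : {set {set T}}) (m : nat)
  (s : nat -> state T) :
  natural_clustering_error Cstar gamma -> clustering C0 -> s 0%N = (C0, set0) ->
  (forall i, (i < m)%N -> step S Cstar eta (s i) (s i.+1)) ->
  m%:R <= 5%:R * (gamma C0 + #|Cstar|)%:R * M.
Proof.
move=> Hg HC0 Hs0 Hst.
have Hi : forall i, (i <= m)%N -> Inv (s i) /\ W (s i) + i%:R <= W (s 0%N).
  move=> i0; elim: i0 => [_|i IH him].
    rewrite Hs0; split; last by rewrite addr0.
    split; [by case/and3P: HC0 | by move=> X; rewrite inE].
  have [Ii Wi] := IH (ltnW him).
  have [Ii' Wi'] := step_W Ii (Hst i him).
  split => //; apply: le_trans Wi; rewrite -natr1.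
  by move: Wi'; move: (W _) (W _) (i%:R) => a b c; lra.
have [_ Wm] := Hi m (leqnn m).
have Wm0 := W_ge0 (s m).
have W0 := W0_bound HC0; rewrite -Hs0 in W0.
have hPhi : (Phi C0 <= gamma C0 + #|Cstar|)%N.
  have := gamma_bound Hg HC0; have := Phi_ge HC0.
  move: (Phi C0) (gamma C0) #|Cstar| #|C0| => a b c d; lia.
have hPhiR : ((Phi C0)%:R : R) <= (gamma C0 + #|Cstar|)%:R by rewrite ler_nat.
have hM := M_ge1.
have hK : 2 * K + 1 <= 5%:R * M by rewrite /K; move: M hM => x hx; lra.
have hg0 : (0 : R) <= (gamma C0 + #|Cstar|)%:R by [].
have hp0 : (0 : R) <= (Phi C0)%:R by [].
move: Wm Wm0 W0 hPhiR hK hg0 hp0 hM.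
move: (W (s m)) (W (s 0%N)) (m%:R) ((Phi C0)%:R) ((gamma C0 + #|Cstar|)%:R) K M => a b c d e k x.
move=> *; nra.
Qed.

End Basics.

Unset Implicit Arguments.

Theorem corollary19 :
  exists c : nat,
  forall (R : realType) (T : finType) (S : T -> T -> R)
         (Cstar : {set {set T}}) (gamma : {set {set T}} -> nat)
         (eta : R) (C0 : {set {set T}}),
    (forall x y, S x y = S y x) ->
    clustering Cstar ->
    strict_threshold_separation S Cstar ->
    natural_clustering_error Cstar gamma ->
    0 < eta -> eta <= 1 ->
    clustering C0 ->
    forall (m : nat) (s : nat -> state T),
      s 0%N = (C0, set0) ->
      (forall i, (i < m)%N -> step S Cstar eta (s i) (s i.+1)) ->
      (forall i, (i < m)%N -> (s i).1 != Cstar) ->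
      m%:R <= c%:R * (gamma C0 + #|Cstar|)%:R
                   * Num.max 1 (log_factor eta #|T|).
Proof.
exists 5%N => R T S Cstar gamma eta C0 _ HC [t [Hin Hout]] Hg he0 he1 HC0 m s Hs0 Hst _.
exact: (run_bound HC Hin Hout he0 he1 Hg HC0 Hs0 Hst).
Qed.
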